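(* For a simplicial set $S$, the conjunction of all Kan conditions $\mathrm{Kan}_p[n]$ for $1\le n\le 2$, $0\le p\le n$, is equivalent to the conjunction of all Beck–Chevalley conditions $\mathrm{BC}_{p,q}[n]$ for $n\le 2$ (that is, $\mathrm{BC}_{0,1}[2]$, $\mathrm{BC}_{0,2}[2]$, $\mathrm{BC}_{1,2}[2]$).
   Context: The Kan condition $\mathrm{Kan}_p[n]$ ($n>0$, $0\le p\le n$) on $S$: for any $(n-1)$-simplices $c_0,\dots,c_{p-1},c_{p+1},\dots,c_n$ of $S$ with $d_ic_j=d_{j-1}c_i$ for all $0\le i<j\le n$ with $p\notin\{i,j\}$, there exists an $n$-simplex $x$ with $d_ix=c_i$ for all $i\ne p$. The Beck–Chevalley condition $\mathrm{BC}_{p,q}[n]$ ($n>1$, $0\le p<q\le n$): for any $(n-1)$-simplices $c_p,c_q$ of $S$ with $d_pc_q=d_{q-1}c_p$ there exists an $n$-simplex $x$ with $d_px=c_p$ and $d_qx=c_q$. *)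

(* Defs.v *)
From mathcomp Require Import all_boot.
Set Implicit Arguments. Unset Strict Implicit. Unset Printing Implicit Defensive.

(* Face/degeneracy with out-of-range index are arbitrary (unconstrained). *)
Record sSet := SSet {
  simp : nat -> Type;
  face : forall n, nat -> simp n.+1 -> simp n;
  degen : forall n, nat -> simp n -> simp n.+1;
  dd : forall n i j (x : simp n.+2), i < j -> j <= n.+2 ->
         face i (face j x) = face j.-1 (face i x);
  ss : forall n i j (x : simp n), i <= j -> j <= n ->
         degen i (degen j x) = degen j.+1 (degen i x);
  ds_lt : forall n i j (x : simp n.+1), i < j -> j <= n.+1 ->
         face i (degen j x) = degen j.-1 (face i x);
  ds_eq : forall n j (x : simp n), j <= n -> face j (degen j x) = x;
  ds_eq1 : forall n j (x : simp n), j <= n -> face j.+1 (degen j x) = x;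
  ds_gt : forall n i j (x : simp n.+1), j.+1 < i -> i <= n.+2 ->
         face i (degen j x) = degen j (face i.-1 x)
}.

Definition horn_compat (S : sSet) (p m : nat) : (nat -> simp S m) -> Prop :=
  match m with
  | 0 => fun _ => True
  | k.+1 => fun c => forall i j, i < j -> j <= k.+2 -> i != p -> j != p ->
              face i (c j) = face j.-1 (c i)
  end.

(* Kan_p[n] for n > 0 (here n = m+1, simplices c_i of dimension m = n-1) *)
Definition Kan (S : sSet) (p n : nat) : Prop :=
  match n with
  | 0 => True
  | m.+1 => forall c : nat -> simp S m, horn_compat p c ->
      exists x : simp S m.+1, forall i, i <= m.+1 -> i != p -> face i x = c i
  end.

Definition BC (S : sSet) (p q n : nat) : Prop :=
  match n with
  | k.+2 => forall cp cq : simp S k.+1, face p cq = face q.-1 cp ->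
      exists x : simp S k.+2, face p x = cp /\ face q x = cq
  | _ => True
  end.

(* Main.v *)
Require Import Defs.
From mathcomp Require Import all_boot.

Theorem mainTheorem4 (S : sSet) :
  (forall n p, 1 <= n -> n <= 2 -> p <= n -> Kan S p n) <->
  (forall p q, p < q -> q <= 2 -> BC S p q 2).
Proof.
split.
- move=> H p q pq q2 cp cq E.
  case: p q pq q2 E => [|[|[|p]]] [|[|[|q]]] // _ _ E.
  + have [|x Hx] := H 2 2 isT isT isT (fun i => if i == 0 then cp else cq).
      by move=> [|[|[|i]]] [|[|[|j]]].
    by exists x; split; [exact: (Hx 0) | exact: (Hx 1)].
  + have [|x Hx] := H 2 1 isT isT isT (fun i => if i == 0 then cp else cq).
      by move=> [|[|[|i]]] [|[|[|j]]].
    by exists x; split; [exact: (Hx 0) | exact: (Hx 2)].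
  + have [|x Hx] := H 2 0 isT isT isT (fun i => if i == 1 then cp else cq).
      by move=> [|[|[|i]]] [|[|[|j]]].
    by exists x; split; [exact: (Hx 1) | exact: (Hx 2)].
- move=> H n p n1 n2 pn.
  case: n n1 n2 pn => [|[|[|n]]] // _ _.
  + case: p => [|[|p]] // _ c _.
    * exists (degen 0 (c 1)) => -[|[|i]] //= _ _. exact: (ds_eq1 (n:=0)).
    * exists (degen 0 (c 0)) => -[|[|i]] //= _ _. exact: (ds_eq (n:=0)).
  + case: p => [|[|[|p]]] // _ c C.
    * have [|x [H1 H2]] := H 1 2 isT isT (c 1) (c 2). exact: C.
      by exists x => -[|[|[|i]]].
    * have [|x [H1 H2]] := H 0 2 isT isT (c 0) (c 2). exact: C.
      by exists x => -[|[|[|i]]].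
    * have [|x [H1 H2]] := H 0 1 isT isT (c 0) (c 1). exact: C.
      by exists x => -[|[|[|i]]].
Qed.
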